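(* Let $c>0$, $a=\ln c$, and let $\phi^{\bullet}(\epsilon;c)$, $\phi^{\ell_2}(\epsilon;c)$ be as below. Define $$\phi^{\ell_2}_{\mathrm{ren}}(c)=\lim_{\epsilon\to0^+}\Big[\phi^{\ell_2}-R(\phi^{\ell_2})-R(\phi^{\bullet})\,\phi^{\bullet}+R\big(R(\phi^{\bullet})\,\phi^{\bullet}\big)\Big](\epsilon;c).$$ Then the limit exists and $\phi^{\ell_2}_{\mathrm{ren}}(c)=\dfrac{a^2}{2}+\dfrac{\pi^2}{4}$.
   Context: For $c>0$ and $0<\epsilon<1/2$: $\phi^{\bullet}(\epsilon;c)=\int_0^\infty\frac{y^{-\epsilon}dy}{y+c}$ and $\phi^{\ell_2}(\epsilon;c)=\int_0^\infty\frac{y^{-\epsilon}dy}{y+c}\int_0^\infty\frac{z^{-\epsilon}dz}{z+y}$. The subtraction operator $R$ acts on a function $F(\epsilon;c)$ which, for each fixed $c$, has a Laurent expansion in $\epsilon$ at $\epsilon=0$ with finite principal part: $R(F)$ is the function of $\epsilon$ alone (constant in $c$) equal to the principal (pole) part of the Laurent expansion of $\epsilon\mapsto F(\epsilon;1)$. Products such as $R(\phi^\bullet)\phi^\bullet$ are pointwise products of functions of $(\epsilon,c)$. *)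

(* Defs.v *)
From Stdlib Require Import Reals List ClassicalEpsilon.
From Coquelicot Require Import Coquelicot.
Open Scope R_scope.

Definition int0inf (f : R -> R) : R :=
  RInt_gen f (at_right 0) (Rbar_locally p_infty).

Definition phi_dot (eps c : R) : R :=
  int0inf (fun y => Rpower y (- eps) / (y + c)).

Definition phi_l2 (eps c : R) : R :=
  int0inf (fun y => Rpower y (- eps) / (y + c) *
                    int0inf (fun z => Rpower z (- eps) / (z + y))).

(* The finite principal part  sum_{k=1}^{N} a_{k} eps^{-k}  (a k is the coefficient of eps^{-(k+1)}). *)
Definition principal_sum (N : nat) (a : nat -> R) (e : R) : R :=
  fold_right Rplus 0 (map (fun k => a k / e ^ (S k)) (seq 0 N)).

Definition is_principal_part (g P : R -> R) : Prop :=
  exists (N : nat) (a b : nat -> R) (delta : R),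
    0 < delta /\
    P = principal_sum N a /\
    forall e, 0 < e < delta -> is_pseries b e (g e - P e).

(* The subtraction operator R: principal part of eps |-> F(eps; 1), viewed as a function of eps
   alone (constant in c).  Chosen by description; it is unique when it exists. *)
Definition Rop (F : R -> R -> R) : R -> R :=
  epsilon (inhabits (fun _ : R => 0)) (fun P => is_principal_part (fun e => F e 1) P).

(* Main.v *)
Require Import Defs.
From Stdlib Require Import Reals Lra Lia List ClassicalEpsilon.
From Coquelicot Require Import Coquelicot.
Open Scope R_scope.

Lemma sin_sq x : sin x * sin x = 1 - cos x * cos x.
Proof. pose proof (sin2 x). unfold Rsqr in H. lra. Qed.

Lemma der1 k x : is_derive (fun x => sin x * cos x ^ S k) x
   (INR (S (S k)) * cos x ^ (S (S k)) - INR (S k) * cos x ^ k).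
Proof.
  auto_derive; auto.
  change (match k with 0%nat => 1 | S _ => INR k + 1 end) with (INR (S k)).
  rewrite (S_INR (S k)). set (m := INR (S k)). set (c := cos x). set (s := sin x).
  apply Rminus_diag_uniq.
  transitivity (- m * c ^ k * (s * s - (1 - c * c))).
  - simpl. ring.
  - unfold s, c. rewrite sin_sq. ring.
Qed.

Lemma der2 k x : is_derive (fun x => x * cos x ^ (S (S k)) + INR (S (S k)) / 2 * x^2 * sin x * cos x ^ (S k)) x
   (cos x ^ (S (S k)) + INR (S (S k)) * INR (S (S k)) / 2 * (x^2 * cos x ^ (S (S k)))
     - INR (S (S k)) * INR (S k) / 2 * (x^2 * cos x ^ k)).
Proof.
  auto_derive; auto.
  change (match k with 0%nat => 1 | S _ => INR k + 1 end) with (INR (S k)).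
  rewrite !(S_INR (S k)). set (m := INR (S k)). set (c := cos x). set (s := sin x).
  apply Rminus_diag_uniq.
  transitivity (- (m+1) * m / 2 * x^2 * c ^ k * (s * s - (1 - c * c))).
  - simpl. field.
  - unfold s, c. rewrite sin_sq. ring.
Qed.

Lemma is_RInt_same (f : R -> R) a b l1 l2 : is_RInt f a b l1 -> is_RInt f a b l2 -> l1 = l2.
Proof. intros H1 H2. rewrite <- (is_RInt_unique _ _ _ _ H1). now apply is_RInt_unique. Qed.

Definition Aw n : R := RInt (fun x => cos x ^ (2*n)) 0 (PI/2).
Definition Bw n : R := RInt (fun x => x^2 * cos x ^ (2*n)) 0 (PI/2).

Lemma isA n : is_RInt (fun x => cos x ^ (2*n)) 0 (PI/2) (Aw n).
Proof. unfold Aw, Bw. apply (@RInt_correct R_CompleteNormedModule), (@ex_RInt_continuous R_CompleteNormedModule). intros z _. apply (@ex_derive_continuous R_AbsRing R_NormedModule). auto_derive. auto. Qed.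
Lemma isB n : is_RInt (fun x => x^2 * cos x ^ (2*n)) 0 (PI/2) (Bw n).
Proof. unfold Aw, Bw. apply (@RInt_correct R_CompleteNormedModule), (@ex_RInt_continuous R_CompleteNormedModule). intros z _. apply (@ex_derive_continuous R_AbsRing R_NormedModule). auto_derive. auto. Qed.

Lemma A_rec n : INR (S (S (2*n))) * Aw (S n) = INR (S (2*n)) * Aw n.
Proof.
  set (k := (2*n)%nat).
  assert (Hk : (2 * S n)%nat = S (S k)) by (unfold k; lia).
  assert (H1 := is_RInt_derive (fun x => sin x * cos x ^ S k) _ 0 (PI/2) (fun x _ => der1 k x)).
  assert (H2 : is_RInt (fun x => INR (S (S k)) * cos x ^ S (S k) - INR (S k) * cos x ^ k) 0 (PI/2)
     (INR (S (S k)) * Aw (S n) - INR (S k) * Aw n)).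
  { apply (is_RInt_minus (fun x => INR (S (S k)) * cos x ^ S (S k)) (fun x => INR (S k) * cos x ^ k)).
    - apply (is_RInt_scal (fun x => cos x ^ S (S k))). rewrite <- Hk. apply isA.
    - apply (is_RInt_scal (fun x => cos x ^ k)). apply isA. }
  assert (H := is_RInt_same _ _ _ _ _ H2 (H1 ltac:(intros; apply (@ex_derive_continuous R_AbsRing R_NormedModule); auto_derive; auto))).
  cbv beta in H. rewrite cos_PI2, sin_0, pow_i in H by lia.
  assert (E : forall v u : R, minus (v * 0) (0 * u) = 0) by (intros; unfold minus, plus, opp; simpl; ring).
  rewrite E in H. apply Rminus_diag_uniq. exact H.
Qed.

Lemma AB_rec n : Aw (S n) + INR (S (S (2*n))) * INR (S (S (2*n))) / 2 * Bw (S n)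
   - INR (S (S (2*n))) * INR (S (2*n)) / 2 * Bw n = 0.
Proof.
  set (k := (2*n)%nat).
  assert (Hk : (2 * S n)%nat = S (S k)) by (unfold k; lia).
  assert (H1 := is_RInt_derive _ _ 0 (PI/2) (fun x _ => der2 k x)).
  assert (H2 : is_RInt (fun x => cos x ^ (S (S k)) + INR (S (S k)) * INR (S (S k)) / 2 * (x^2 * cos x ^ (S (S k)))
     - INR (S (S k)) * INR (S k) / 2 * (x^2 * cos x ^ k)) 0 (PI/2)
     (Aw (S n) + INR (S (S k)) * INR (S (S k)) / 2 * Bw (S n) - INR (S (S k)) * INR (S k) / 2 * Bw n)).
  { apply (is_RInt_minus (fun x => cos x ^ (S (S k)) + INR (S (S k)) * INR (S (S k)) / 2 * (x^2 * cos x ^ (S (S k))))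
        (fun x => INR (S (S k)) * INR (S k) / 2 * (x^2 * cos x ^ k))).
    - apply (is_RInt_plus (fun x => cos x ^ (S (S k))) (fun x => INR (S (S k)) * INR (S (S k)) / 2 * (x^2 * cos x ^ (S (S k))))).
      + rewrite <- Hk. apply isA.
      + apply (is_RInt_scal (fun x => x^2 * cos x ^ (S (S k)))). rewrite <- Hk. apply isB.
    - apply (is_RInt_scal (fun x => x^2 * cos x ^ k)). apply isB. }
  assert (H := is_RInt_same _ _ _ _ _ H2 (H1 ltac:(intros; apply (@ex_derive_continuous R_AbsRing R_NormedModule); auto_derive; auto))).
  rewrite H. cbv beta. rewrite cos_PI2, sin_0, !pow_i by lia. unfold minus, plus, opp; simpl. ring.
Qed.

Lemma A0 : Aw 0 = PI/2.
Proof.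
  assert (H := is_RInt_const 0 (PI/2) 1).
  apply (is_RInt_ext _ (fun x => cos x ^ (2*0))) in H. 2:{ intros; reflexivity. }
  rewrite (is_RInt_same _ _ _ _ _ (isA 0) H). unfold scal; simpl; unfold mult; simpl. ring.
Qed.

Lemma B0 : Bw 0 = (PI/2)^3/3.
Proof.
  assert (H := is_RInt_pow 0 (PI/2) 2).
  apply (is_RInt_ext _ (fun x => x^2 * cos x ^ (2*0))) in H.
  2:{ intros; simpl; ring. }
  rewrite (is_RInt_same _ _ _ _ _ (isB 0) H). simpl. field.
Qed.

Lemma A_pos n : 0 < Aw n.
Proof.
  induction n.
  - rewrite A0. pose proof PI_RGT_0. lra.
  - assert (H := A_rec n).
    assert (Hq : 0 < INR (S (S (2*n)))) by (apply lt_0_INR; lia).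
    assert (Hp : 0 < INR (S (2*n))) by (apply lt_0_INR; lia).
    assert (Aw (S n) = INR (S (2*n)) * Aw n / INR (S (S (2*n)))) by (rewrite <- H; field; lra).
    rewrite H0. apply Rdiv_lt_0_compat; [apply Rmult_lt_0_compat|]; assumption.
Qed.

Definition rw n := Bw n / Aw n.

Lemma rw_step n : / (INR n + 1)^2 = 2 * rw n - 2 * rw (S n).
Proof.
  unfold rw. assert (H1 := A_rec n). assert (H2 := AB_rec n).
  assert (Ha := A_pos n). assert (Ha1 := A_pos (S n)).
  rewrite !S_INR in *. rewrite mult_INR in *. simpl INR in *. set (n' := INR n) in *.
  replace ((1+1)*n'+1+1) with (2*n'+2) in * by ring. replace ((1+1)*n'+1) with (2*n'+1) in * by ring.
  assert (Hb : Bw (S n) = (2*n'+1) * Bw n / (2*n'+2) - 2 * Aw (S n) / (2*n'+2)^2).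
  { assert (0 <= n') by apply pos_INR.
    apply Rminus_diag_uniq. apply Rmult_eq_reg_l with ((2*n'+2)^2/2).
    2:{ apply Rgt_not_eq. assert (0 < 2 * n' + 2) by lra. 
        apply Rdiv_lt_0_compat; [ apply pow_lt; lra | lra]. }
    rewrite Rmult_0_r. rewrite <- H2. field. lra. }
  assert (Hb0 : Aw (S n) = (2*n'+1) * Aw n / (2*n'+2)).
  { assert (0 <= n') by apply pos_INR. apply Rmult_eq_reg_l with (2*n'+2). 2: lra.
    rewrite H1. field. lra. }
  assert (0 <= n') by apply pos_INR.
  rewrite Hb. rewrite Hb0. field. repeat split; try lra.
Qed.

Lemma sin_lb3 x : 0 <= x -> x <= 2 -> x / 3 <= sin_lb x.
Proof.
  intros H0 H2. unfold sin_lb, sin_approx, sin_term. simpl.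
  assert (Hu : x * x <= 4) by nra.
  assert (0 <= x * x) by nra.
  assert (0 <= x * x * (x * x) * (1/120 - x * x / 5040)) by (apply Rmult_le_pos; nra).
  assert (0 <= x * (2/3 - x*x/6)) by (apply Rmult_le_pos; nra).
  assert (0 <= x * (x * x * (x * x) * (1/120 - x * x / 5040))) by (apply Rmult_le_pos; nra).
  field_simplify. nra.
Qed.

Lemma x_le_3sin x : 0 <= x -> x <= PI/2 -> x <= 3 * sin x.
Proof.
  intros H0 H1. pose proof PI_4. pose proof PI_RGT_0.
  assert (HS := SIN x H0 ltac:(lra)). assert (H3 := sin_lb3 x H0 ltac:(lra)). lra.
Qed.

Lemma Bw_bound n : 0 <= Bw n <= 9 * (Aw n - Aw (S n)).
Proof.
  assert (Hpi : 0 < PI/2) by (pose proof PI_RGT_0; lra).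
  split.
  - apply (is_RInt_le (fun _ => 0) (fun x => x^2 * cos x ^ (2*n)) 0 (PI/2) 0 (Bw n)); try lra.
    + assert (H := is_RInt_const 0 (PI/2) 0). unfold scal in H; simpl in H; unfold mult in H; simpl in H.
      rewrite Rmult_0_r in H. exact H.
    + apply isB.
    + intros x Hx. apply Rmult_le_pos. apply pow2_ge_0. rewrite pow_mult. apply pow_le, pow2_ge_0.
  - apply (is_RInt_le (fun x => x^2 * cos x ^ (2*n)) (fun x => 9 * (cos x ^ (2*n) - cos x ^ (2 * S n))) 0 (PI/2)); try lra.
    + apply isB.
    + apply (is_RInt_scal (fun x => cos x ^ (2*n) - cos x ^ (2 * S n))).
      apply (is_RInt_minus (fun x => cos x ^ (2*n)) (fun x => cos x ^ (2 * S n))); apply isA.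
    + intros x Hx.
      replace (2 * S n)%nat with (2 + 2 * n)%nat by lia. rewrite pow_add.
      assert (Hc : 0 <= cos x ^ (2 * n)) by (rewrite pow_mult; apply pow_le, pow2_ge_0).
      assert (Hs := x_le_3sin x ltac:(lra) ltac:(lra)).
      assert (Hss := sin_sq x).
      assert (x^2 <= 9 * (1 - cos x ^ 2)) by (simpl; nra).
      replace (9 * (cos x ^ (2 * n) - cos x ^ 2 * cos x ^ (2 * n))) with (9 * (1 - cos x^2) * cos x ^ (2*n)) by ring.
      apply Rmult_le_compat_r; assumption.
Qed.

Lemma rw_bound n : 0 <= rw n <= 9 / (2 * INR n + 2).
Proof.
  assert (H := Bw_bound n). assert (Ha := A_pos n). assert (H1 := A_rec n).
  unfold rw. rewrite !S_INR, mult_INR in H1. simpl INR in H1. set (n' := INR n) in *.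
  replace ((1+1)*n'+1+1) with (2*n'+2) in * by ring. replace ((1+1)*n'+1) with (2*n'+1) in * by ring.
  assert (0 <= n') by apply pos_INR.
  assert (Hb0 : Aw (S n) = (2*n'+1) * Aw n / (2*n'+2)).
  { apply Rmult_eq_reg_l with (2*n'+2). 2: lra. rewrite H1. field. lra. }
  rewrite Hb0 in H. split.
  - apply Rdiv_le_0_compat; lra.
  - apply Rmult_le_reg_r with (Aw n). lra. field_simplify; try lra.
    replace (9 * (Aw n - (2 * n' + 1) * Aw n / (2 * n' + 2))) with (9 * Aw n / (2*n'+2)) in H by (field; lra).
    lra.
Qed.

Lemma inv_Sn_0 : is_lim_seq (fun n => / INR (S n)) 0.
Proof.
  assert (H := proj1 (is_lim_seq_incr_1 INR p_infty) is_lim_seq_INR).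
  apply (is_lim_seq_inv _ _ H). discriminate.
Qed.

Lemma basel : is_series (fun n => / (INR n + 1)^2) (PI^2/6).
Proof.
  unfold is_series.
  assert (Hs : forall N, sum_n (fun n => / (INR n + 1)^2) N = 2 * rw 0 - 2 * rw (S N)).
  { induction N.
    - rewrite sum_O. apply rw_step.
    - rewrite sum_Sn, IHN. rewrite (rw_step (S N)). unfold plus; simpl. ring. }
  assert (Hr0 : 2 * rw 0 = PI^2/6).
  { unfold rw. rewrite A0, B0. field. pose proof PI_RGT_0. lra. }
  apply (filterlim_ext (fun N => 2 * rw 0 - 2 * rw (S N))). { intros; now rewrite Hs. }
  replace (PI^2/6) with (2 * rw 0 - 2 * 0) by lra.
  apply (is_lim_seq_minus' _ _ _ _ (is_lim_seq_const _)).
  apply (is_lim_seq_scal_l _ 2 0).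
  apply (is_lim_seq_le_le (fun _ => 0) _ (fun n => 9 * / INR (S n))).
  - intros n. pose proof (rw_bound (S n)). split; [lra|].
    rewrite S_INR in *. assert (0 <= INR n) by apply pos_INR.
    apply Rle_trans with (1 := proj2 H). unfold Rdiv. apply Rmult_le_compat_l; [lra|].
    apply Rinv_le_contravar; lra.
  - apply is_lim_seq_const.
  - replace (Finite 0) with (Rbar_mult 9 0) by (simpl; f_equal; ring). apply is_lim_seq_scal_l, inv_Sn_0.
Qed.

Lemma ex_zeta2 : ex_series (fun n => / (INR n + 1)^2).
Proof. exists (PI^2/6). apply basel. Qed.

Lemma Rabs_m1pow n : Rabs ((-1)^n) = 1.
Proof. rewrite <- RPow_abs, Rabs_m1. apply pow1. Qed.

Lemma eta2 : is_series (fun n => (-1)^n / (INR n + 1)^2) (PI^2/12).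
Proof.
  set (a := fun n => (-1)^n / (INR n + 1)^2).
  assert (Hex : ex_series a).
  { apply (@ex_series_le R_AbsRing R_CompleteNormedModule _ (fun n => / (INR n + 1)^2)). 2: apply ex_zeta2.
    intros n. unfold a. change (norm ?x) with (Rabs x).
    rewrite Rabs_div. rewrite Rabs_m1pow. rewrite Rabs_pos_eq. lra.
    apply pow_le. pose proof (pos_INR n); lra.
    apply pow_nonzero. pose proof (pos_INR n); lra. }
  assert (Hsub : forall N, sum_n a (2*N+1) = sum_n (fun n => / (INR n + 1)^2) (2*N+1)
       - / 2 * sum_n (fun n => / (INR n + 1)^2) N).
  { induction N.
    - simpl. rewrite !sum_Sn, !sum_O. unfold a, plus; simpl. field.
    - replace (2 * S N + 1)%nat with (S (S (2*N+1))) by lia.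
      rewrite !sum_Sn, IHN. change (plus ?x ?y) with (Rplus x y).
      assert (E2 : (-1)^(S (2*N+1)) = 1).
      { replace (S (2*N+1)) with (2 * S N)%nat by lia. rewrite pow_mult.
        replace ((-1)^2) with 1 by ring. apply pow1. }
      assert (E1 : (-1)^(S (S (2*N+1))) = -1).
      { change ((-1)^(S (S (2*N+1)))) with (-1 * (-1)^(S (2*N+1))). rewrite E2. ring. }
      unfold a. rewrite E1, E2.
      rewrite !S_INR, !plus_INR, !mult_INR. simpl INR. set (m := INR N). 
      assert (0 <= m) by apply pos_INR.
      generalize (sum_n (fun n => /(INR n+1)^2) (2*N+1)) (sum_n (fun n => /(INR n+1)^2) N).
      intros u v. unfold plus; simpl. field. lra. }
  assert (H1 : filterlim (fun N => sum_n a (2*N+1)) eventually (locally (Series a))).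
  { apply (filterlim_comp _ _ _ (fun N => (2*N+1)%nat) (sum_n a) _ eventually).
    - apply eventually_subseq. intros; lia.
    - apply Series_correct, Hex. }
  assert (H2 : filterlim (fun N => sum_n a (2*N+1)) eventually (locally (PI^2/6 - /2 * (PI^2/6)))).
  { apply (filterlim_ext (fun N => sum_n (fun n => / (INR n + 1)^2) (2*N+1)
       - / 2 * sum_n (fun n => / (INR n + 1)^2) N)). intros; now rewrite Hsub.
    apply (is_lim_seq_minus' _ _ (PI^2/6) (/2 * (PI^2/6))).
    - apply (filterlim_comp _ _ _ (fun N => (2*N+1)%nat) _ _ eventually).
      + apply eventually_subseq. intros; lia.
      + apply basel.
    - apply (is_lim_seq_scal_l _ (/2) (PI^2/6)). apply basel. }
  assert (E : Series a = PI^2/12).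
  { assert (U1 := is_lim_seq_unique _ (Series a) H1). assert (U2 := is_lim_seq_unique _ (PI ^ 2 / 6 - / 2 * (PI ^ 2 / 6)) H2).
    rewrite U1 in U2. injection U2. intros ->. field. }
  rewrite <- E. apply Series_correct, Hex.
Qed.

Lemma is_series_scal_R (c : R) (a : nat -> R) l : is_series a l -> is_series (fun n => c * a n) (c * l).
Proof. intros H. apply (is_series_scal_l c) in H. exact H. Qed.

Lemma ser_bound (f : nat -> R) c : (forall n, Rabs (f n) <= c / (INR n + 1)^2) ->
  ex_series f /\ Rabs (Series f) <= c * (PI^2/6).
Proof.
  intros Hf.
  assert (Hg : is_series (fun n => c / (INR n + 1)^2) (c * (PI^2/6))).
  { apply is_series_scal_R, basel. }
  assert (Ha : ex_series (fun n => Rabs (f n))).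
  { apply (@ex_series_le R_AbsRing R_CompleteNormedModule _ (fun n => c / (INR n + 1)^2)).
    - intros n. change (norm ?x) with (Rabs x). rewrite Rabs_Rabsolu. apply Hf.
    - eexists; exact Hg. }
  split. apply ex_series_Rabs, Ha.
  eapply Rle_trans. apply Series_Rabs, Ha.
  rewrite <- (is_series_unique _ _ Hg). apply Series_le.
  - intros n; split; [apply Rabs_pos | apply Hf].
  - eexists; exact Hg.
Qed.

Lemma sum_Series_swap (f : nat -> nat -> R) K : (forall k, ex_series (f k)) ->
  sum_f_R0 (fun k => Series (f k)) K = Series (fun n => sum_f_R0 (fun k => f k n) K)
  /\ ex_series (fun n => sum_f_R0 (fun k => f k n) K).
Proof.
  intros H. induction K.
  - simpl. split. reflexivity. apply H.
  - destruct IHK as [IH1 IH2]. simpl. split.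
    + rewrite IH1. rewrite <- Series_plus; auto.
    + apply (@ex_series_plus R_AbsRing R_NormedModule _ _ IH2 (H (S K))).
Qed.

Definition bterm (x : R) (n : nat) : R := (-1)^n * 2 / ((INR n + 1)^2 - x^2).
Definition Bf (x : R) : R := Series (bterm x).
Definition beta (k : nat) : R := Series (fun n => (-1)^n * (1 + (-1)^k) / (INR n + 1)^(k+2)).

Lemma beta0 : beta 0 = PI^2/6.
Proof.
  unfold beta. rewrite (Series_ext _ (fun n => 2 * ((-1)^n / (INR n + 1)^2))).
  - rewrite (is_series_unique _ _ (is_series_scal_R 2 _ _ eta2)). field.
  - intros n. simpl. field. pose proof (pos_INR n). lra.
Qed.

Lemma Rabs_m1pow' n : Rabs ((-1)^n) = 1.
Proof. rewrite <- RPow_abs, Rabs_m1. apply pow1. Qed.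

Lemma beta_term_bound k n : Rabs ((-1)^n * (1 + (-1)^k) / (INR n + 1)^(k+2)) <= 2 / (INR n + 1)^2.
Proof.
  assert (Hm : 1 <= INR n + 1) by (pose proof (pos_INR n); lra).
  unfold Rdiv. rewrite !Rabs_mult, Rabs_m1pow'.
  rewrite Rabs_inv. rewrite (Rabs_pos_eq ((INR n + 1)^(k+2))) by (apply pow_le; lra).
  assert (H1 : Rabs (1 + (-1)^k) <= 2).
  { eapply Rle_trans. apply Rabs_triang. rewrite Rabs_m1pow', Rabs_R1. lra. }
  assert (H2 : / (INR n + 1)^(k+2) <= / (INR n + 1)^2).
  { apply Rinv_le_contravar. apply pow_lt; lra. rewrite pow_add.
    rewrite <- (Rmult_1_l ((INR n + 1)^2)) at 1. apply Rmult_le_compat_r. apply pow_le; lra.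
    apply pow_R1_Rle. lra. }
  rewrite Rmult_1_l. apply Rmult_le_compat; try lra. apply Rabs_pos.
  left. apply Rinv_0_lt_compat. apply pow_lt; lra.
Qed.

Lemma beta_ex k : ex_series (fun n => (-1)^n * (1 + (-1)^k) / (INR n + 1)^(k+2)).
Proof. apply (ser_bound _ 2), beta_term_bound. Qed.

Lemma beta_bound k : Rabs (beta k) <= PI^2/3.
Proof.
  unfold beta. eapply Rle_trans. apply (ser_bound _ 2), beta_term_bound. lra.
Qed.

Lemma beta_radius : Rbar_le 1 (CV_radius beta).
Proof.
  destruct (CV_radius_bounded beta) as [Hub _].
  apply Hub. exists (PI^2/3). intros n. rewrite pow1, Rmult_1_r. apply beta_bound.
Qed.

Lemma term_geom x m k : 0 < m ->
  x^k * (1 + (-1)^k) / m^(k+2) = / m^2 * ((x/m)^k + (-(x/m))^k).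
Proof.
  intros Hm. replace (-(x/m)) with (-1 * (x/m)) by ring.
  rewrite Rpow_mult_distr. unfold Rdiv. rewrite Rpow_mult_distr, pow_inv, pow_add.
  field. repeat split; try (apply pow_nonzero); lra.
Qed.

Lemma tail_bound x m K : 0 <= x < 1 -> 1 <= m ->
  Rabs (2 / (m^2 - x^2) - sum_f_R0 (fun k => x^k * (1 + (-1)^k) / m^(k+2)) K)
    <= 2 * x^(S K) / (1 - x) / m^2.
Proof.
  intros Hx Hm. set (r := x / m).
  assert (Hr : 0 <= r <= x) by (unfold r; split; [apply Rdiv_le_0_compat; lra|];
     apply Rmult_le_reg_r with m; [lra|]; unfold Rdiv; rewrite Rmult_assoc, Rinv_l by lra; nra).
  rewrite (sum_eq _ (fun k => (r^k + (-r)^k) * / m^2)).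
  2:{ intros i _. rewrite term_geom by lra. unfold r. ring. }
  rewrite <- scal_sum, plus_sum, !tech3 by lra.
  replace (2 / (m^2 - x^2)) with (/ m^2 * (1/(1-r) + 1/(1+r))).
  2:{ unfold r. field. repeat split; try lra. simpl. nra. }
  replace (/ m ^ 2 * (1 / (1 - r) + 1 / (1 + r)) -
   / m ^ 2 * ((1 - r ^ S K) / (1 - r) + (1 - (- r) ^ S K) / (1 - - r)))
   with (/ m^2 * (r^S K / (1 - r) + (-r)^S K / (1 + r))) by (field; lra).
  rewrite Rabs_mult, Rabs_inv, Rabs_pos_eq by (apply pow_le; lra).
  rewrite Rmult_comm. unfold Rdiv at 3. apply Rmult_le_compat_r.
  { left; apply Rinv_0_lt_compat, pow_lt; lra. }
  eapply Rle_trans. apply Rabs_triang.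
  assert (Hp : 0 <= r ^ S K <= x ^ S K) by (split; [apply pow_le; lra| apply pow_incr; lra]).
  assert (Hq : Rabs ((-r)^S K) = r ^ S K).
  { rewrite <- RPow_abs, Rabs_Ropp, Rabs_pos_eq by lra. reflexivity. }
  rewrite Rabs_div by lra. rewrite Rabs_div by lra. rewrite Hq.
  rewrite (Rabs_pos_eq (r^S K)) by lra. rewrite (Rabs_pos_eq (1 - r)) by lra. rewrite (Rabs_pos_eq (1 + r)) by lra.
  assert (r ^ S K / (1 + r) <= r ^ S K / (1 - r)).
  { unfold Rdiv. apply Rmult_le_compat_l; [lra|]. apply Rinv_le_contravar; lra. }
  assert (r ^ S K / (1 - r) <= x ^ S K / (1 - x)).
  { unfold Rdiv. apply Rmult_le_compat; try lra. left; apply Rinv_0_lt_compat; lra.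
    apply Rinv_le_contravar; lra. }
  lra.
Qed.

Lemma bterm_ex x : 0 <= x < 1 -> ex_series (bterm x).
Proof.
  intros Hx. apply (ser_bound _ (2 / (1 - x^2))). intros n.
  assert (Hm : 1 <= INR n + 1) by (pose proof (pos_INR n); lra).
  set (m := INR n + 1) in *. unfold bterm. fold m.
  assert (Hx2 : x^2 < 1) by (simpl; nra).
  assert (0 <= x*x*(m*m-1)) by (apply Rmult_le_pos; nra).
  assert (Hd : m^2 * (1 - x^2) <= m^2 - x^2) by (simpl; nra).
  assert (0 < m^2 * (1 - x^2)) by (apply Rmult_lt_0_compat; [apply pow_lt; lra| lra]).
  unfold Rdiv. rewrite !Rabs_mult, Rabs_m1pow', Rabs_inv, Rabs_pos_eq by lra.
  rewrite Rabs_pos_eq by lra.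
  replace (2 * / (1 - x^2) * / m^2) with (2 * / (m^2 * (1 - x^2))) by (field; repeat split; try lra; apply pow_nonzero; lra).
  rewrite Rmult_1_l. apply Rmult_le_compat_l; [lra|]. apply Rinv_le_contravar; lra.
Qed.

Lemma Bf_pseries x : 0 <= x < 1 -> is_pseries beta x (Bf x).
Proof.
  intros Hx.
  set (t := fun k n => (-1)^n * (1 + (-1)^k) / (INR n + 1)^(k+2)).
  assert (Htex : forall k, ex_series (fun n => x^k * t k n)).
  { intros k. apply (ser_bound _ 2). intros n. rewrite Rabs_mult.
    assert (Hxk : Rabs (x^k) <= 1) by (rewrite <- RPow_abs; rewrite <- (pow1 k); apply pow_incr; split; [apply Rabs_pos| rewrite Rabs_pos_eq; lra]).
    eapply Rle_trans. 2: apply (beta_term_bound k n). fold (t k n).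
    rewrite <- (Rmult_1_l (Rabs (t k n))) at 2.
    apply Rmult_le_compat_r. apply Rabs_pos. exact Hxk. }
  set (P := fun K => Series (fun n => sum_f_R0 (fun k => x^k * t k n) K)).
  assert (Hpart : forall K, sum_n (fun k => scal (pow_n x k) (beta k)) K = P K).
  { intros K. rewrite sum_n_Reals. unfold P.
    rewrite <- (proj1 (sum_Series_swap _ K Htex)). apply sum_eq. intros i _.
    rewrite Series_scal_l. rewrite pow_n_pow. reflexivity. }
  assert (Hdiff : forall K, Rabs (Bf x - P K) <= 2 * x^(S K) / (1 - x) * (PI^2/6)).
  { intros K. unfold Bf, P. rewrite <- Series_minus.
    2: apply bterm_ex, Hx. 2: apply (proj2 (sum_Series_swap _ K Htex)).
    apply ser_bound. intros n.
    assert (Hm : 1 <= INR n + 1) by (pose proof (pos_INR n); lra).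
    replace (bterm x n - sum_f_R0 (fun k => x ^ k * t k n) K) with
      ((-1)^n * (2 / ((INR n + 1)^2 - x^2) - sum_f_R0 (fun k => x^k * (1 + (-1)^k) / (INR n + 1)^(k+2)) K)).
    - rewrite Rabs_mult, Rabs_m1pow', Rmult_1_l. apply tail_bound; assumption.
    - unfold bterm, t. rewrite Rmult_minus_distr_l. f_equal. unfold Rdiv; ring.
      rewrite scal_sum. apply sum_eq. intros i _. unfold Rdiv. ring. }
  unfold is_pseries. apply (is_series_ext (fun k => scal (pow_n x k) (beta k))). reflexivity.
  unfold is_series.
  apply (filterlim_ext (fun K => Bf x - (Bf x - P K))). { intros K; rewrite Hpart; ring. }
  assert (L : is_lim_seq (fun K => Bf x - (Bf x - P K)) (Bf x - 0)).
  2:{ rewrite Rminus_0_r in L. exact L. }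
  apply (is_lim_seq_minus' _ _ _ _ (is_lim_seq_const _)).
  apply is_lim_seq_abs_0.
  apply (is_lim_seq_le_le (fun _ => 0) _ (fun K => (2 * x / (1 - x) * (PI^2/6)) * x^K)).
  - intros K. split. apply Rabs_pos. eapply Rle_trans. apply Hdiff. simpl. right. field. lra.
  - apply is_lim_seq_const.
  - replace (Finite 0) with (Rbar_mult (2 * x / (1 - x) * (PI^2/6)) 0) by (simpl; f_equal; ring).
    apply is_lim_seq_scal_l, is_lim_seq_geom. rewrite Rabs_pos_eq; lra.
Qed.

Lemma Rpower_pos t q : 0 < Rpower t q.
Proof. apply exp_pos. Qed.

Lemma Rpower_S t n p : 0 < t -> Rpower t (INR (S n) + p) = t * Rpower t (INR n + p).
Proof.
  intros Ht. rewrite S_INR. replace (INR n + 1 + p) with (1 + (INR n + p)) by ring.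
  rewrite Rpower_plus, Rpower_1 by lra. reflexivity.
Qed.

Lemma Rpower_inv t q : 0 < t -> Rpower (/ t) q = Rpower t (- q).
Proof. intros Ht. unfold Rpower. rewrite ln_Rinv by lra. f_equal; ring. Qed.

Lemma is_derive_Rpower t q : 0 < t -> is_derive (fun t => Rpower t q) t (q * Rpower t (q - 1)).
Proof. intros Ht. apply is_derive_Reals. apply derivable_pt_lim_power. exact Ht. Qed.

Lemma cont_Rpower t q : 0 < t -> continuous (fun t => Rpower t q) t.
Proof.
  intros Ht. apply (@ex_derive_continuous R_AbsRing R_NormedModule).
  eexists. apply is_derive_Rpower, Ht.
Qed.

Lemma cont_h t q c : 0 < t -> 0 <= c -> continuous (fun t => Rpower t q / (t + c)) t.
Proof.
  intros Ht Hc. apply (continuous_mult (fun t => Rpower t q) (fun t => / (t + c))).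
  apply cont_Rpower, Ht.
  apply (@ex_derive_continuous R_AbsRing R_NormedModule). auto_derive. lra.
Qed.

Lemma ex_RInt_h a b q c : 0 < a -> 0 < b -> 0 <= c -> ex_RInt (fun t => Rpower t q / (t + c)) a b.
Proof.
  intros Ha Hb Hc. apply (@ex_RInt_continuous R_CompleteNormedModule). intros z Hz.
  apply cont_h; try lra. assert (0 < Rmin a b) by (apply Rmin_glb_lt; lra). lra.
Qed.

Lemma is_RInt_Rpower a q : 0 < a -> 0 < q + 1 ->
  is_RInt (fun t => Rpower t q) a 1 ((1 - Rpower a (q + 1)) / (q + 1)).
Proof.
  intros Ha Hq.
  assert (H := is_RInt_derive (fun t => Rpower t (q + 1) / (q + 1)) (fun t => Rpower t q) a 1).
  replace ((1 - Rpower a (q + 1)) / (q + 1)) with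
    (minus ((fun t => Rpower t (q + 1) / (q + 1)) 1) ((fun t => Rpower t (q + 1) / (q + 1)) a)).
  2:{ cbv beta. unfold Rpower at 1. rewrite ln_1, Rmult_0_r, exp_0.
      unfold minus, plus, opp; simpl. field. lra. }
  apply H.
  - intros x Hx. assert (0 < x) by (assert (0 < Rmin a 1) by (apply Rmin_glb_lt; lra); lra).
    replace (Rpower x q) with ((q + 1) * Rpower x (q + 1 - 1) / (q + 1)).
    2:{ replace (q + 1 - 1) with q by ring. field. lra. }
    apply (@is_derive_ext R_AbsRing R_NormedModule (fun t => / (q+1) * Rpower t (q+1))). { intros; simpl; unfold Rdiv; ring. }
    replace ((q + 1) * Rpower x (q + 1 - 1) / (q + 1)) with (/ (q+1) * ((q + 1) * Rpower x (q + 1 - 1))) by (field; lra).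
    apply (is_derive_scal (fun t => Rpower t (q+1))). 
    apply is_derive_Rpower. lra.
  - intros x Hx. assert (0 < x) by (assert (0 < Rmin a 1) by (apply Rmin_glb_lt; lra); lra).
    apply cont_Rpower. lra.
Qed.

Definition hf (p t : R) : R := Rpower t p / (t + 1).

Lemma hf_split p N t : 0 < t -> hf p t =
  sum_f_R0 (fun n => (-1)^n * Rpower t (INR n + p)) N + (-1)^(S N) * (Rpower t (INR (S N) + p) / (t + 1)).
Proof.
  intros Ht. induction N.
  - unfold hf. rewrite Rpower_S by lra. simpl sum_f_R0. simpl INR. rewrite Rplus_0_l.
    simpl. field. lra.
  - rewrite IHN. rewrite tech5. rewrite (Rpower_S t (S N)) by lra.
    set (X := Rpower t (INR (S N) + p)).
    change ((-1)^(S (S N))) with (-1 * (-1)^(S N)). field. lra.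
Qed.

Lemma is_RInt_sumpow p N a : 0 < a -> -1 < p ->
  is_RInt (fun t => sum_f_R0 (fun n => (-1)^n * Rpower t (INR n + p)) N) a 1
    (sum_f_R0 (fun n => (-1)^n * ((1 - Rpower a (INR n + p + 1)) / (INR n + p + 1))) N).
Proof.
  intros Ha Hp. induction N.
  - simpl. apply (is_RInt_scal (fun t => Rpower t (0 + p))). apply is_RInt_Rpower. lra. lra.
  - change (sum_f_R0 ?f (S N)) with (sum_f_R0 f N + f (S N)). cbv beta.
    apply (is_RInt_plus (fun t => sum_f_R0 (fun n => (-1)^n * Rpower t (INR n + p)) N)
       (fun t => (-1)^(S N) * Rpower t (INR (S N) + p))). exact IHN.
    apply (is_RInt_scal (fun t => Rpower t (INR (S N) + p))). apply is_RInt_Rpower. lra.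
    pose proof (pos_INR (S N)). lra.
Qed.

Lemma sum_apow_bound a p N : 0 < a < 1 -> -1 < p ->
  Rabs (sum_f_R0 (fun n => (-1)^n * (Rpower a (INR n + p + 1) / (INR n + p + 1))) N)
   <= Rpower a (p + 1) / ((p + 1) * (1 - a)).
Proof.
  intros Ha Hp. eapply Rle_trans. apply Rsum_abs.
  eapply Rle_trans. apply (sum_Rle _ (fun n => a^n * (Rpower a (p + 1) / (p + 1)))).
  - intros n _. rewrite Rabs_mult, Rabs_m1pow', Rmult_1_l.
    assert (0 <= INR n) by apply pos_INR.
    replace (INR n + p + 1) with (INR n + (p + 1)) by ring.
    rewrite Rpower_plus, Rpower_pow by lra.
    pose proof (Rpower_pos a (p+1)).
    assert (0 <= a^n) by (apply pow_le; lra).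
    rewrite Rabs_pos_eq. 2:{ apply Rdiv_le_0_compat. apply Rmult_le_pos; lra. lra. }
    unfold Rdiv. rewrite Rmult_assoc. apply Rmult_le_compat_l; [lra|].
    apply Rmult_le_compat_l; [lra|]. apply Rinv_le_contravar; lra.
  - rewrite <- scal_sum, tech3 by lra. pose proof (Rpower_pos a (p+1)).
    assert (0 <= a ^ S N) by (apply pow_le; lra).
    replace (Rpower a (p + 1) / ((p + 1) * (1 - a))) with ((1 / (1 - a)) * (Rpower a (p + 1) / (p + 1))) by (field; lra).
    rewrite (Rmult_comm (1 / (1 - a))).
    apply Rmult_le_compat_l. apply Rdiv_le_0_compat; lra.
    unfold Rdiv. apply Rmult_le_compat_r. left; apply Rinv_0_lt_compat; lra. lra.
Qed.

Lemma int_a1 p N a : -1 < p -> 0 < a < 1 ->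
  Rabs (RInt (hf p) a 1 - sum_f_R0 (fun n => (-1)^n / (INR n + 1 + p)) N)
   <= 1 / (INR N + 2 + p) + Rpower a (p + 1) / ((p + 1) * (1 - a)).
Proof.
  intros Hp Ha.
  set (q := INR (S N) + p).
  assert (Hq : 0 < q + 1) by (unfold q; pose proof (pos_INR (S N)); lra).
  set (Rem := RInt (fun t => Rpower t q / (t + 1)) a 1).
  assert (HRem : is_RInt (fun t => Rpower t q / (t + 1)) a 1 Rem).
  { apply (@RInt_correct R_CompleteNormedModule). apply ex_RInt_h; lra. }
  assert (Hs := is_RInt_sumpow p N a ltac:(lra) Hp).
  set (sumI := sum_f_R0 (fun n => (-1)^n * ((1 - Rpower a (INR n + p + 1)) / (INR n + p + 1))) N) in Hs.
  assert (Hh : is_RInt (hf p) a 1 (sumI + (-1)^(S N) * Rem)).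
  { apply (is_RInt_ext (fun t => sum_f_R0 (fun n => (-1)^n * Rpower t (INR n + p)) N + (-1)^(S N) * (Rpower t q / (t + 1)))).
    - intros x Hx. rewrite Rmin_left in Hx by lra. symmetry. apply hf_split. lra.
    - apply (is_RInt_plus (fun t => sum_f_R0 (fun n => (-1)^n * Rpower t (INR n + p)) N)
        (fun t => (-1)^(S N) * (Rpower t q / (t + 1)))). exact Hs.
      apply (is_RInt_scal (fun t => Rpower t q / (t + 1))). exact HRem. }
  rewrite (is_RInt_unique _ _ _ _ Hh).
  assert (HR0 : 0 <= Rem).
  { apply (is_RInt_le (fun _ => 0) (fun t => Rpower t q / (t + 1)) a 1 0 Rem); try lra.
    - assert (H := is_RInt_const a 1 0). unfold scal in H; simpl in H; unfold mult in H; simpl in H.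
      rewrite Rmult_0_r in H. exact H.
    - exact HRem.
    - intros x Hx. apply Rdiv_le_0_compat. left; apply Rpower_pos. lra. }
  assert (HR1 : Rem <= (1 - Rpower a (q + 1)) / (q + 1)).
  { apply (is_RInt_le (fun t => Rpower t q / (t + 1)) (fun t => Rpower t q) a 1); try lra.
    - exact HRem.
    - apply is_RInt_Rpower; lra.
    - intros x Hx. pose proof (Rpower_pos x q). unfold Rdiv.
      rewrite <- (Rmult_1_r (Rpower x q)) at 2. apply Rmult_le_compat_l. lra.
      rewrite <- Rinv_1. apply Rinv_le_contravar; lra. }
  assert (HR2 : Rabs ((-1)^(S N) * Rem) <= 1 / (INR N + 2 + p)).
  { rewrite Rabs_mult, Rabs_m1pow', Rmult_1_l, Rabs_pos_eq by lra.
    eapply Rle_trans. exact HR1. pose proof (Rpower_pos a (q+1)).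
    replace (INR N + 2 + p) with (q + 1) by (unfold q; rewrite S_INR; ring).
    unfold Rdiv. apply Rmult_le_compat_r. left; apply Rinv_0_lt_compat; lra. lra. }
  assert (HsI : sumI = sum_f_R0 (fun n => (-1)^n / (INR n + 1 + p)) N
       - sum_f_R0 (fun n => (-1)^n * (Rpower a (INR n + p + 1) / (INR n + p + 1))) N).
  { unfold sumI. rewrite <- minus_sum. apply sum_eq. intros i _.
    assert (0 <= INR i) by apply pos_INR.
    replace (INR i + 1 + p) with (INR i + p + 1) by ring. field. lra. }
  rewrite HsI.
  assert (Hb := sum_apow_bound a p N Ha Hp).
  set (S1 := sum_f_R0 (fun n => (-1)^n / (INR n + 1 + p)) N) in *.
  set (S2 := sum_f_R0 (fun n => (-1)^n * (Rpower a (INR n + p + 1) / (INR n + p + 1))) N) in *.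
  replace (S1 - S2 + (-1) ^ S N * Rem - S1) with ((-1)^(S N) * Rem + - S2) by ring.
  eapply Rle_trans. apply Rabs_triang. rewrite Rabs_Ropp. lra.
Qed.

Lemma subst_inv eps b : 0 < eps -> 1 < b -> RInt (hf (-eps)) 1 b = RInt (hf (eps - 1)) (/b) 1.
Proof.
  intros He Hb.
  assert (Hb' : 0 < / b < 1) by (split; [apply Rinv_0_lt_compat; lra| rewrite <- Rinv_1; apply Rinv_lt_contravar; lra]).
  assert (Hpos : forall x, Rmin (/b) 1 <= x <= Rmax (/b) 1 -> 0 < x).
  { intros x Hx. rewrite Rmin_left in Hx by lra. lra. }
  assert (H := is_RInt_comp (hf (-eps)) (fun y => / y) (fun y => - / y^2) (/b) 1).
  rewrite Rinv_inv, Rinv_1 in H.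
  assert (H' : is_RInt (fun y => scal (- / y^2) (hf (-eps) (/ y))) (/b) 1 (RInt (hf (-eps)) b 1)).
  { apply H.
    - intros x Hx. apply cont_h. apply Rinv_0_lt_compat, Hpos, Hx. lra.
    - intros x Hx. pose proof (Hpos x Hx). split.
      + auto_derive. lra. field. lra.
      + apply (@ex_derive_continuous R_AbsRing R_NormedModule). auto_derive. intro Hc. nra. }
  clear H.
  apply is_RInt_opp in H'.
  apply (is_RInt_ext _ (hf (eps - 1))) in H'.
  - assert (E1 : RInt (hf (eps-1)) (/b) 1 = opp (RInt (hf (-eps)) b 1)) by (apply is_RInt_unique; exact H').
    assert (E2 : opp (RInt (hf (-eps)) b 1) = RInt (hf (-eps)) 1 b) by (apply opp_RInt_swap; apply ex_RInt_h; lra).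
    rewrite E1. symmetry. exact E2.
  - intros x Hx. rewrite Rmin_left in Hx by lra. assert (Hx0 : 0 < x) by lra.
    unfold hf, scal; simpl; unfold mult, opp; simpl.
    rewrite Rpower_inv by lra. replace (- - eps) with (1 + (eps - 1)) by ring.
    rewrite Rpower_plus, Rpower_1 by lra. field. lra.
Qed.

Definition Ival (eps : R) : R := 1 / eps + eps * Bf eps.

Lemma T_identity eps N : 0 < eps < 1 ->
  sum_f_R0 (fun n => (-1)^n / (INR n + 1 + - eps)) N
  + sum_f_R0 (fun n => (-1)^n / (INR n + 1 + (eps - 1))) (S N)
  = 1 / eps + eps * sum_f_R0 (bterm eps) N.
Proof.
  intros He. induction N.
  - simpl. unfold bterm. simpl. field. repeat split; try lra. nra.
  - rewrite tech5. rewrite (tech5 _ (S N)). rewrite (tech5 (bterm eps) N).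
    replace (1 / eps + eps * (sum_f_R0 (bterm eps) N + bterm eps (S N))) with
      ((1 / eps + eps * sum_f_R0 (bterm eps) N) + eps * bterm eps (S N)) by ring.
    rewrite <- IHN. rewrite tech5.
    unfold bterm. rewrite !S_INR. set (m := INR N). assert (0 <= m) by apply pos_INR.
    change ((-1)^(S (S N))) with (-1 * (-1)^(S N)). change ((-1)^(S N)) with (-1 * (-1)^N).
    field. repeat split; try lra. nra.
Qed.

Lemma le_lim (u v : R) (w : nat -> R) : (forall N, u <= v + w N) -> is_lim_seq w 0 -> u <= v.
Proof.
  intros H Hw.
  assert (H2 := is_lim_seq_le (fun _ => u) (fun N => v + w N) u (v + 0) H (is_lim_seq_const u)
     (is_lim_seq_plus' _ _ _ _ (is_lim_seq_const v) Hw)).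
  simpl in H2. lra.
Qed.

Lemma inv_lin c : 0 < c -> is_lim_seq (fun N => 1 / (INR N + c)) 0.
Proof.
  intros Hc.
  assert (H : is_lim_seq (fun N => INR N + c) p_infty).
  { apply (is_lim_seq_plus INR (fun _ => c) p_infty c p_infty is_lim_seq_INR (is_lim_seq_const c)).
    simpl. reflexivity. }
  apply (is_lim_seq_ext (fun N => / (INR N + c))). { intros; unfold Rdiv; ring. }
  apply (is_lim_seq_inv _ _ H). discriminate.
Qed.

Lemma main_est eps a b : 0 < eps < 1 -> 0 < a < 1 -> 1 < b ->
  Rabs (RInt (hf (-eps)) a b - Ival eps)
   <= Rpower a (1 - eps) / ((1 - eps) * (1 - a)) + Rpower (/ b) eps / (eps * (1 - / b)).
Proof.
  intros He Ha Hb.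
  assert (Hb' : 0 < / b < 1) by (split; [apply Rinv_0_lt_compat; lra| rewrite <- Rinv_1; apply Rinv_lt_contravar; lra]).
  assert (HC : RInt (hf (-eps)) a b = RInt (hf (-eps)) a 1 + RInt (hf (eps - 1)) (/b) 1).
  { rewrite <- subst_inv by lra. symmetry. apply (RInt_Chasles (V := R_CompleteNormedModule)); apply ex_RInt_h; lra. }
  rewrite HC. clear HC.
  set (I1 := RInt (hf (-eps)) a 1). set (I2 := RInt (hf (eps - 1)) (/b) 1).
  set (w := fun N : nat => 1 / (INR N + 2 + - eps) + 1 / (INR (S N) + 2 + (eps - 1))
          + eps * Rabs (sum_f_R0 (bterm eps) N - Bf eps)).
  apply (le_lim _ _ w).
  - intros N.
    assert (H1 := int_a1 (-eps) N a ltac:(lra) Ha).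
    assert (H2 := int_a1 (eps - 1) (S N) (/b) ltac:(lra) Hb').
    assert (HT := T_identity eps N He).
    fold I1 in H1. fold I2 in H2.
    replace (- eps + 1) with (1 - eps) in H1 by ring.
    replace (eps - 1 + 1) with eps in H2 by ring.
    unfold w.
    set (T1 := sum_f_R0 (fun n => (-1)^n / (INR n + 1 + - eps)) N) in *.
    set (T2 := sum_f_R0 (fun n => (-1)^n / (INR n + 1 + (eps - 1))) (S N)) in *.
    set (Sb := sum_f_R0 (bterm eps) N) in *.
    unfold Ival.
    replace (I1 + I2 - (1 / eps + eps * Bf eps)) with ((I1 - T1) + (I2 - T2) + eps * (Sb - Bf eps))
      by (assert (HT' : 1/eps = T1 + T2 - eps * Sb) by (rewrite HT; ring); rewrite HT'; ring).
    eapply Rle_trans. apply Rabs_triang. eapply Rle_trans. apply Rplus_le_compat_r. apply Rabs_triang.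
    rewrite Rabs_mult, (Rabs_pos_eq eps) by lra. lra.
  - unfold w.
    replace (Finite 0) with (Finite (0 + 0 + eps * 0)) by (f_equal; ring).
    apply is_lim_seq_plus'; [apply is_lim_seq_plus'|].
    + apply (is_lim_seq_ext (fun N => 1 / (INR N + (2 - eps)))). { intros; f_equal; ring. }
      apply inv_lin. lra.
    + apply (is_lim_seq_ext (fun N => 1 / (INR N + (2 + eps)))). { intros; rewrite S_INR; f_equal; ring. }
      apply inv_lin. lra.
    + apply (is_lim_seq_scal_l _ eps 0). apply (proj1 (is_lim_seq_abs_0 _)).
      apply (is_lim_seq_ext (fun N => sum_n (bterm eps) N - Bf eps)). { intros; now rewrite sum_n_Reals. }
      replace (Finite 0) with (Finite (Bf eps - Bf eps)) by (f_equal; ring).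
      apply is_lim_seq_minus'. 2: apply is_lim_seq_const.
      apply (Series_correct (bterm eps)). apply bterm_ex. lra.
Qed.

Lemma RInt_scale eps c a b : 0 < c -> 0 < a -> 0 < b ->
  RInt (fun y => Rpower y (-eps) / (y + c)) a b = Rpower c (-eps) * RInt (hf (-eps)) (a/c) (b/c).
Proof.
  intros Hc Ha Hb.
  assert (Hl : is_RInt (hf (-eps)) (/c * a + 0) (/c * b + 0) (RInt (hf (-eps)) (a/c) (b/c))).
  { replace (/c * a + 0) with (a/c) by (unfold Rdiv; ring). replace (/c * b + 0) with (b/c) by (unfold Rdiv; ring).
    apply (@RInt_correct R_CompleteNormedModule). apply ex_RInt_h; try lra; apply Rdiv_lt_0_compat; lra. }
  apply is_RInt_comp_lin in Hl.
  assert (Hf : is_RInt (fun y => Rpower c eps * (Rpower y (-eps) / (y + c))) a b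
       (Rpower c eps * RInt (fun y => Rpower y (-eps) / (y + c)) a b)).
  { apply (is_RInt_scal (fun y => Rpower y (-eps) / (y + c))).
    apply (@RInt_correct R_CompleteNormedModule). apply ex_RInt_h; lra. }
  apply (is_RInt_ext _ (fun y => Rpower c eps * (Rpower y (-eps) / (y + c)))) in Hl.
  - assert (E := is_RInt_same _ _ _ _ _ Hl Hf).
    assert (K : Rpower c (-eps) * Rpower c eps = 1).
    { rewrite <- Rpower_plus. replace (-eps + eps) with 0 by ring. apply Rpower_O; lra. }
    rewrite E. rewrite <- Rmult_assoc, K, Rmult_1_l. reflexivity.
  - intros x Hx. assert (0 < x) by (assert (0 < Rmin a b) by (apply Rmin_glb_lt; lra); lra).
    unfold hf, scal; simpl; unfold mult; simpl.
    replace (/ c * x + 0) with (x * / c) by ring.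
    rewrite <- Rpower_mult_distr by (try apply Rinv_0_lt_compat; lra).
    rewrite Rpower_inv by lra. replace (- - eps) with eps by ring.
    field. split; lra.
Qed.

Lemma small_pow d q : 0 < d -> 0 < q -> exists x0, 0 < x0 /\ forall x, 0 < x < x0 -> Rpower x q < d.
Proof.
  intros Hd Hq. exists (Rpower d (/ q)). split. apply Rpower_pos.
  intros x Hx. assert (E : Rpower (Rpower d (/q)) q = d).
  { rewrite Rpower_mult. rewrite Rinv_l by lra. apply Rpower_1; lra. }
  rewrite <- E. apply Rlt_Rpower_l; lra.
Qed.

Lemma gen_from_bound (f : R -> R) L :
  (forall a b, 0 < a -> 0 < b -> ex_RInt f a b) ->
  (forall eta, 0 < eta -> exists a0 b0, 0 < a0 /\ forall a b, 0 < a < a0 -> b0 < b -> Rabs (RInt f a b - L) < eta) ->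
  is_RInt_gen f (at_right 0) (Rbar_locally p_infty) L.
Proof.
  intros Hex Hb P [eps HP].
  destruct (Hb eps (cond_pos eps)) as [a0 [b0 [Ha0 Hab]]].
  unfold filtermapi.
  apply (Filter_prod _ _ _ (fun a => 0 < a < a0) (fun b => Rmax b0 1 < b)).
  - exists (mkposreal a0 Ha0). intros y Hy Hy0. split. exact Hy0.
    unfold ball in Hy; simpl in Hy; unfold AbsRing_ball, abs, minus, plus, opp in Hy; simpl in Hy.
    apply Rabs_lt_between in Hy. lra.
  - exists (Rmax b0 1). intros x Hx. exact Hx.
  - intros a b Ha Hbb. simpl.
    assert (Hm1 := Rmax_l b0 1). assert (Hm2 := Rmax_r b0 1).
    exists (RInt f a b). split.
    + apply (@RInt_correct R_CompleteNormedModule). apply Hex; lra.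
    + apply HP. unfold ball; simpl; unfold AbsRing_ball, abs, minus, plus, opp; simpl.
      apply Hab; lra.
Qed.

Lemma frac_bound P q r d : 0 < q -> 1/2 <= r -> 0 <= P < q * d / 2 -> P / (q * r) < d.
Proof.
  intros Hq Hr HP. assert (0 < q * r) by nra.
  set (z := P / (q * r)). assert (Hz : z * (q * r) = P) by (unfold z; field; lra).
  assert (0 <= z) by (unfold z; apply Rdiv_le_0_compat; lra).
  destruct (Rlt_or_le z d) as [Hzd|Hzd]; [exact Hzd|].
  exfalso. assert (z * (q * r) >= d * (q * r)) by (apply Rmult_ge_compat_r; lra).
  assert (d * (q * r) >= d * (q / 2)).
  { assert (0 < d) by nra. apply Rmult_ge_compat_l; nra. }
  nra.
Qed.

Lemma phi_gen eps c : 0 < eps < 1 -> 0 < c ->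
  is_RInt_gen (fun y => Rpower y (-eps) / (y + c)) (at_right 0) (Rbar_locally p_infty) (Rpower c (-eps) * Ival eps).
Proof.
  intros He Hc. apply gen_from_bound.
  - intros a b Ha Hb. apply ex_RInt_h; lra.
  - intros eta Heta. set (K := Rpower c (-eps)). assert (HK : 0 < K) by apply Rpower_pos.
    destruct (small_pow ((1 - eps) * (eta / (2 * K)) / 2) (1 - eps)) as [xa [Hxa Pa]].
    { apply Rdiv_lt_0_compat; [apply Rmult_lt_0_compat; [lra| apply Rdiv_lt_0_compat; lra]| lra]. } lra.
    destruct (small_pow (eps * (eta / (2 * K)) / 2) eps) as [xb [Hxb Pb]].
    { apply Rdiv_lt_0_compat; [apply Rmult_lt_0_compat; [lra| apply Rdiv_lt_0_compat; lra]| lra]. } lra.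
    exists (c * Rmin xa (1/2)), (c * Rmax 2 (/ xb)). split.
    { apply Rmult_lt_0_compat; [lra| apply Rmin_glb_lt; lra]. }
    intros a b Ha Hb.
    assert (Hm1 := Rmin_l xa (1/2)). assert (Hm2 := Rmin_r xa (1/2)).
    assert (HM1 := Rmax_l 2 (/xb)). assert (HM2 := Rmax_r 2 (/xb)).
    assert (Ha' : 0 < a / c < Rmin xa (1/2)).
    { split. apply Rdiv_lt_0_compat; lra. apply Rmult_lt_reg_l with c; [lra|]. unfold Rdiv.
      rewrite <- Rmult_assoc, (Rmult_comm c a), Rmult_assoc, Rinv_r, Rmult_1_r by lra. lra. }
    assert (Hb' : Rmax 2 (/ xb) < b / c).
    { apply Rmult_lt_reg_l with c; [lra|]. unfold Rdiv.
      rewrite <- Rmult_assoc, (Rmult_comm c b), Rmult_assoc, Rinv_r, Rmult_1_r by lra. lra. }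
    assert (Hbpos : 0 < b).
    { assert (c * 2 <= c * Rmax 2 (/xb)) by (apply Rmult_le_compat_l; lra). lra. }
    rewrite RInt_scale by lra. fold K.
    replace (K * RInt (hf (- eps)) (a / c) (b / c) - K * Ival eps) with (K * (RInt (hf (- eps)) (a / c) (b / c) - Ival eps)) by ring.
    rewrite Rabs_mult, (Rabs_pos_eq K) by lra.
    assert (Hest := main_est eps (a/c) (b/c) He ltac:(lra) ltac:(lra)).
    set (b' := b / c) in *. set (a' := a / c) in *.
    assert (Hib : 0 < / b' <= 1/2).
    { split. apply Rinv_0_lt_compat; lra. replace (1/2) with (/2) by field. apply Rinv_le_contravar; lra. }
    assert (Hib2 : / b' < xb).
    { assert (0 < /xb) by (apply Rinv_0_lt_compat; lra).
      rewrite <- (Rinv_inv xb). apply Rinv_lt_contravar. nra. lra. }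
    assert (HA : Rpower a' (1 - eps) / ((1 - eps) * (1 - a')) < eta / (2 * K)).
    { apply frac_bound; try lra. split. left; apply Rpower_pos. apply Pa. lra. }
    assert (HB : Rpower (/ b') eps / (eps * (1 - / b')) < eta / (2 * K)).
    { apply frac_bound; try lra. split. left; apply Rpower_pos. apply Pb. lra. }
    eapply Rle_lt_trans. apply Rmult_le_compat_l; [lra| exact Hest].
    assert (E : eta = K * (eta / (2 * K) + eta / (2 * K))) by (field; lra).
    rewrite E at 1. apply Rmult_lt_compat_l; lra.
Qed.

Lemma phi_dot_gen_val eps c : 0 < eps < 1 -> 0 < c ->
  RInt_gen (fun y => Rpower y (-eps) / (y + c)) (at_right 0) (Rbar_locally p_infty) = Rpower c (-eps) * Ival eps.
Proof. intros. apply is_RInt_gen_unique. apply phi_gen; assumption. Qed.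

Lemma phi_dot_val e c : 0 < e < 1 -> 0 < c -> phi_dot e c = Rpower c (-e) * Ival e.
Proof. intros. unfold phi_dot, int0inf. apply phi_dot_gen_val; assumption. Qed.

Lemma phi_l2_val e c : 0 < e < 1/2 -> 0 < c -> phi_l2 e c = Ival e * (Rpower c (-(2*e)) * Ival (2*e)).
Proof.
  intros He Hc. unfold phi_l2, int0inf. apply is_RInt_gen_unique.
  assert (H := phi_gen (2*e) c ltac:(lra) Hc).
  apply (is_RInt_gen_scal _ (Ival e)) in H.
  apply (is_RInt_gen_ext (fun y => scal (Ival e) (Rpower y (- (2 * e)) / (y + c)))).
  2: exact H.
  apply (Filter_prod _ _ _ (fun a => 0 < a) (fun b => 0 < b)).
  - exists (mkposreal 1 Rlt_0_1). intros y _ Hy. exact Hy.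
  - exists 0. intros x Hx. exact Hx.
  - intros a b Ha Hb x Hx. simpl in Hx.
    assert (Hx0 : 0 < x) by (assert (0 < Rmin a b) by (apply Rmin_glb_lt; lra); lra).
    rewrite (phi_dot_gen_val e x) by lra.
    unfold scal; simpl; unfold mult; simpl.
    replace (- (2 * e)) with (-e + -e) by ring. rewrite Rpower_plus. field. lra.
Qed.

Lemma fold_scal (f : nat -> R) c (l : list nat) :
  fold_right Rplus 0 (map (fun k => c * f k) l) = c * fold_right Rplus 0 (map f l).
Proof. induction l; simpl. ring. rewrite IHl. ring. Qed.

Lemma ps_rec N a e : e <> 0 ->
  principal_sum (S N) a e = (a 0%nat + principal_sum N (fun k => a (S k)) e) / e.
Proof.
  intros He. unfold principal_sum.
  set (T := fold_right Rplus 0 (map (fun k => a (S k) / e ^ S k) (seq 0 N))).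
  change (seq 0 (S N)) with (0%nat :: seq 1 N). rewrite <- seq_shift. cbn [map fold_right]. rewrite map_map.
  rewrite (map_ext (fun x => a (S x) / e ^ S (S x)) (fun x => / e * (a (S x) / e ^ S x))).
  2:{ intros x. change (e ^ S (S x)) with (e * e ^ S x). field. split; auto. apply pow_nonzero; auto. }
  rewrite fold_scal. fold T. simpl pow. field. auto.
Qed.

Lemma ps_0 a e : principal_sum 0 a e = 0.
Proof. reflexivity. Qed.

Definition Bnd (f : R -> R) := exists eta K, 0 < eta /\ forall e, 0 < e < eta -> Rabs (f e) <= K.

Lemma small_const c K eta : 0 < eta -> (forall e, 0 < e < eta -> Rabs c <= K * e) -> c = 0.
Proof.
  intros Heta H. destruct (Req_dec c 0) as [|Hc]; auto. exfalso.
  assert (Hc' : 0 < Rabs c) by (apply Rabs_pos_lt; auto).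
  set (e := Rmin (eta/2) (Rabs c / (2 * (Rabs K + 1)))).
  assert (HK : 0 < Rabs K + 1) by (pose proof (Rabs_pos K); lra).
  assert (He1 : e <= eta / 2) by apply Rmin_l.
  assert (He2 : e <= Rabs c / (2 * (Rabs K + 1))) by apply Rmin_r.
  assert (He0 : 0 < e) by (apply Rmin_glb_lt; [lra| apply Rdiv_lt_0_compat; lra]).
  assert (H1 := H e ltac:(lra)).
  assert (K * e <= Rabs K * e) by (apply Rmult_le_compat_r; [lra| apply Rle_abs]).
  assert (Rabs K * e <= Rabs K * (Rabs c / (2 * (Rabs K + 1)))) by (apply Rmult_le_compat_l; [apply Rabs_pos| lra]).
  assert (Rabs K * (Rabs c / (2 * (Rabs K + 1))) < Rabs c).
  { apply Rmult_lt_reg_r with (2 * (Rabs K + 1)). lra. field_simplify; try lra.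
    pose proof (Rabs_pos K). nra. }
  lra.
Qed.

Lemma Bnd_step c (f : R -> R) : Bnd (fun e => (c + f e) / e) ->
  Bnd f /\ (forall eta K, 0 < eta -> (forall e, 0 < e < eta -> Rabs ((c + f e) / e) <= K) ->
     forall e, 0 < e < eta -> Rabs (c + f e) <= K * e).
Proof.
  intros [eta [K [Heta H]]].
  assert (G : forall eta K, 0 < eta -> (forall e, 0 < e < eta -> Rabs ((c + f e) / e) <= K) ->
     forall e, 0 < e < eta -> Rabs (c + f e) <= K * e).
  { intros eta' K' Heta' H' e He. specialize (H' e He).
    replace (c + f e) with ((c + f e) / e * e) by (field; lra).
    rewrite Rabs_mult, (Rabs_pos_eq e) by lra. apply Rmult_le_compat_r; lra. }
  split; [| exact G].
  exists eta, (K * eta + Rabs c). split; auto. intros e He.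
  assert (H1 := G eta K Heta H e He).
  assert (K * e <= K * eta).
  { assert (0 <= K).
    { specialize (H e He). pose proof (Rabs_pos ((c + f e) / e)). lra. }
    apply Rmult_le_compat_l; lra. }
  replace (f e) with ((c + f e) + - c) by ring.
  eapply Rle_trans. apply Rabs_triang. rewrite Rabs_Ropp. lra.
Qed.

Lemma Bnd_ext (f g : R -> R) : (forall e, 0 < e -> f e = g e) -> Bnd f -> Bnd g.
Proof.
  intros H [eta [K [Heta Hb]]]. exists eta, K. split; auto. intros e He. rewrite <- H by lra. auto.
Qed.

Lemma pp_zero1 M : forall a, Bnd (principal_sum M a) -> forall e, 0 < e -> principal_sum M a e = 0.
Proof.
  induction M; intros a Hb e He.
  - reflexivity.
  - set (f := principal_sum M (fun k => a (S k))).
    assert (Hb' : Bnd (fun e => (a 0%nat + f e) / e)).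
    { apply (Bnd_ext (principal_sum (S M) a)); auto. intros; apply ps_rec; lra. }
    destruct (Bnd_step _ _ Hb') as [Hf G].
    assert (Hf0 : forall e, 0 < e -> f e = 0) by (apply IHM; exact Hf).
    destruct Hb' as [eta [K [Heta Hk]]].
    assert (Ha0 : a 0%nat = 0).
    { apply (small_const _ K eta Heta). intros e' He'.
      assert (H := G eta K Heta Hk e' He'). rewrite Hf0 in H by lra. rewrite Rplus_0_r in H. exact H. }
    rewrite ps_rec by lra. fold f. rewrite Ha0, Hf0 by lra. field. lra.
Qed.

Lemma pp_zero N : forall M a a', Bnd (fun e => principal_sum N a e - principal_sum M a' e) ->
  forall e, 0 < e -> principal_sum N a e = principal_sum M a' e.
Proof.
  induction N; intros M a a' Hb e He.
  - rewrite ps_0. symmetry. apply pp_zero1; auto.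
    destruct Hb as [eta [K [Heta Hk]]]. exists eta, K. split; auto. intros e' He'.
    specialize (Hk e' He'). rewrite ps_0 in Hk. rewrite Rminus_0_l, Rabs_Ropp in Hk. exact Hk.
  - destruct M as [|M].
    + rewrite ps_0. apply pp_zero1; auto.
      destruct Hb as [eta [K [Heta Hk]]]. exists eta, K. split; auto. intros e' He'.
      specialize (Hk e' He'). rewrite ps_0, Rminus_0_r in Hk. exact Hk.
    + set (f := fun e => principal_sum N (fun k => a (S k)) e - principal_sum M (fun k => a' (S k)) e).
      assert (Hb' : Bnd (fun e => (a 0%nat - a' 0%nat + f e) / e)).
      { apply (Bnd_ext (fun e => principal_sum (S N) a e - principal_sum (S M) a' e)); auto.
        intros e' He'. rewrite !ps_rec by lra. unfold f. field. lra. }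
      destruct (Bnd_step _ _ Hb') as [Hf G].
      assert (Hf0 : forall e, 0 < e -> f e = 0).
      { intros e' He'. unfold f. apply Rminus_diag_eq. apply IHN; auto. }
      destruct Hb' as [eta [K [Heta Hk]]].
      assert (Ha0 : a 0%nat - a' 0%nat = 0).
      { apply (small_const _ K eta Heta). intros e' He'.
        assert (H := G eta K Heta Hk e' He'). rewrite Hf0 in H by lra. rewrite Rplus_0_r in H. exact H. }
      rewrite !ps_rec by lra. assert (H := Hf0 e He). unfold f in H. field_simplify; try lra.
      replace (a 0%nat) with (a' 0%nat) by lra.
      assert (E : principal_sum N (fun k => a (S k)) e = principal_sum M (fun k => a' (S k)) e) by lra.
      rewrite E. reflexivity.
Qed.

Lemma pseries_bnd (b : nat -> R) d : 0 < d -> (forall e, 0 < e < d -> ex_pseries b e) ->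
  exists eta K, 0 < eta /\ forall e, 0 < e < eta -> Rabs (PSeries b e) <= K.
Proof.
  intros Hd Hex.
  assert (H0 := Hex (d/2) ltac:(lra)).
  assert (Hl : is_lim_seq (fun n => (d/2)^n * b n) 0).
  { apply ex_series_lim_0. destruct H0 as [l Hl]. exists l.
    apply (is_series_ext (fun k => scal (pow_n (d/2) k) (b k))). 2: exact Hl.
    intros n. unfold scal; simpl; unfold mult; simpl. rewrite pow_n_pow. reflexivity. }
  destruct (filterlim_bounded (fun n => (d/2)^n * b n)) as [M HM].
  { exists 0. exact Hl. }
  assert (Hr : Rbar_le (d/2) (CV_radius b)).
  { destruct (CV_radius_bounded b) as [Hub _]. apply Hub. exists M. intros n.
    specialize (HM n). change (norm ?x) with (Rabs x) in HM. rewrite Rmult_comm. exact HM. }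
  assert (Hr0 : Rbar_lt (Rabs 0) (CV_radius b)).
  { rewrite Rabs_R0. destruct (CV_radius b) as [r| |]; simpl in *; auto; lra. }
  assert (Hc := proj1 (continuity_pt_filterlim _ _) (PSeries_continuity b 0 Hr0)).
  apply (proj1 (filterlim_locally _ _)) with (eps := mkposreal 1 Rlt_0_1) in Hc.
  destruct Hc as [eta Heta].
  exists eta, (Rabs (PSeries b 0) + 1). split. apply cond_pos.
  intros e He. assert (Hb : ball 0 eta e).
  { unfold ball; simpl; unfold AbsRing_ball, abs, minus, plus, opp; simpl. rewrite Ropp_0, Rplus_0_r, Rabs_pos_eq; lra. }
  specialize (Heta e Hb). unfold ball in Heta; simpl in Heta; unfold AbsRing_ball, abs, minus, plus, opp in Heta; simpl in Heta.
  replace (PSeries b e) with (PSeries b 0 + (PSeries b e + - PSeries b 0)) by ring.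
  eapply Rle_trans. apply Rabs_triang. lra.
Qed.

Lemma pp_unique g P Q : is_principal_part g P -> is_principal_part g Q -> forall e, 0 < e -> P e = Q e.
Proof.
  intros [N [a [b [d1 [Hd1 [-> H1]]]]]] [M [a' [b' [d2 [Hd2 [-> H2]]]]]].
  apply pp_zero.
  destruct (pseries_bnd b d1 Hd1) as [eta1 [K1 [He1 Hk1]]].
  { intros e He. eexists. apply (H1 e He). }
  destruct (pseries_bnd b' d2 Hd2) as [eta2 [K2 [He2 Hk2]]].
  { intros e He. eexists. apply (H2 e He). }
  exists (Rmin (Rmin eta1 eta2) (Rmin d1 d2)), (K1 + K2). split.
  { repeat apply Rmin_glb_lt; lra. }
  intros e He.
  assert (Hm1 := Rmin_l (Rmin eta1 eta2) (Rmin d1 d2)). assert (Hm2 := Rmin_r (Rmin eta1 eta2) (Rmin d1 d2)).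
  assert (Rmin eta1 eta2 <= eta1) by apply Rmin_l. assert (Rmin eta1 eta2 <= eta2) by apply Rmin_r.
  assert (Rmin d1 d2 <= d1) by apply Rmin_l. assert (Rmin d1 d2 <= d2) by apply Rmin_r.
  assert (E1 := is_pseries_unique _ _ _ (H1 e ltac:(lra))).
  assert (E2 := is_pseries_unique _ _ _ (H2 e ltac:(lra))).
  replace (principal_sum N a e - principal_sum M a' e) with (PSeries b' e - PSeries b e).
  2:{ rewrite E1, E2. ring. }
  unfold Rminus. eapply Rle_trans. apply Rabs_triang. rewrite Rabs_Ropp.
  assert (Rabs (PSeries b e) <= K1) by (apply Hk1; lra).
  assert (Rabs (PSeries b' e) <= K2) by (apply Hk2; lra). lra.
Qed.

Lemma Rop_val F P : is_principal_part (fun e => F e 1) P -> forall e, 0 < e -> Rop F e = P e.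
Proof.
  intros H e He. apply (pp_unique (fun e => F e 1)); auto.
  unfold Rop. apply epsilon_spec. exists P. exact H.
Qed.

Lemma Rpower_1_l x : Rpower 1 x = 1.
Proof. unfold Rpower. rewrite ln_1, Rmult_0_r. apply exp_0. Qed.

Definition gam (k : nat) : R := 2^k * beta k.

Lemma gam_pseries e : 0 <= e < 1/2 -> is_pseries gam e (Bf (2*e)).
Proof.
  intros He. assert (H := Bf_pseries (2*e) ltac:(lra)).
  apply (is_series_ext (fun k => scal (pow_n (2*e) k) (beta k))). 2: exact H.
  intros n. unfold gam, scal; simpl; unfold mult; simpl. rewrite !pow_n_pow, Rpow_mult_distr, <- Rmult_assoc. f_equal. apply Rmult_comm.
Qed.

Lemma gam_radius : Rbar_le (1/2) (CV_radius gam).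
Proof.
  destruct (CV_radius_bounded gam) as [Hub _].
  apply Hub. exists (PI^2/3). intros n. unfold gam.
  replace (2 ^ n * beta n * (1/2)^n) with (beta n * (2 * (1/2))^n) by (rewrite Rpow_mult_distr; ring).
  replace (2 * (1/2)) with 1 by field. rewrite pow1, Rmult_1_r. apply beta_bound.
Qed.

Lemma radius_lt (a : nat -> R) (r : R) e : Rbar_le r (CV_radius a) -> 0 <= e < r -> Rbar_lt (Rabs e) (CV_radius a).
Proof.
  intros H He. rewrite Rabs_pos_eq by lra. revert H. destruct (CV_radius a) as [x| |]; simpl; intros; auto; lra.
Qed.

Lemma pp_dot : is_principal_part (fun e => phi_dot e 1) (principal_sum 1 (fun _ => 1)).
Proof.
  exists 1%nat, (fun _ => 1), (PS_incr_1 beta), (1/2). split. lra. split. reflexivity.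
  intros e He. rewrite phi_dot_val by lra. rewrite Rpower_1_l, Rmult_1_l.
  replace (Ival e - principal_sum 1 (fun _ => 1) e) with (scal e (Bf e)).
  - apply (@is_pseries_incr_1 R_AbsRing R_NormedModule), Bf_pseries. lra.
  - unfold Ival, principal_sum; simpl. unfold scal; simpl; unfold mult; simpl. field. lra.
Qed.

Lemma Rop_dot e : 0 < e -> Rop phi_dot e = 1 / e.
Proof. intros He. rewrite (Rop_val _ _ pp_dot e He). unfold principal_sum; simpl. field. lra. Qed.

Lemma pp_dd : is_principal_part (fun e => Rop phi_dot e * phi_dot e 1) (principal_sum 2 (fun k => match k with 0%nat => 0 | _ => 1 end)).
Proof.
  exists 2%nat, (fun k => match k with 0%nat => 0 | _ => 1 end), beta, (1/2). split. lra. split. reflexivity.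
  intros e He. rewrite phi_dot_val, Rop_dot by lra. rewrite Rpower_1_l, Rmult_1_l.
  replace (1 / e * Ival e - principal_sum 2 (fun k => match k with 0%nat => 0 | _ => 1 end) e) with (Bf e).
  - apply Bf_pseries. lra.
  - unfold Ival, principal_sum; simpl. field. lra.
Qed.

Lemma Rop_dd e : 0 < e -> Rop (fun e' c' => Rop phi_dot e' * phi_dot e' c') e = 1 / e^2.
Proof. intros He. rewrite (Rop_val _ _ pp_dd e He). unfold principal_sum; simpl. field. lra. Qed.

Definition c3 : nat -> R := PS_plus (PS_plus (PS_scal 2 gam) (PS_scal (1/2) beta))
   (PS_scal 2 (PS_incr_1 (PS_incr_1 (PS_mult beta gam)))).

Lemma c3_pseries e : 0 <= e < 1/4 ->
  is_pseries c3 e (2 * Bf (2*e) + 1/2 * Bf e + 2 * (e * (e * (Bf e * Bf (2*e))))).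
Proof.
  intros He. unfold c3.
  apply (@is_pseries_plus R_AbsRing R_NormedModule _ _ _ (plus (scal 2 (Bf (2*e))) (scal (1/2) (Bf e)))).
  apply (@is_pseries_plus R_AbsRing R_NormedModule).
  - apply (@is_pseries_scal R_AbsRing R_NormedModule). unfold mult; simpl; ring. apply gam_pseries; lra.
  - apply (@is_pseries_scal R_AbsRing R_NormedModule). unfold mult; simpl; ring. apply Bf_pseries; lra.
  - apply (@is_pseries_scal R_AbsRing R_NormedModule 2 _ e (e * (e * (Bf e * Bf (2 * e))))). unfold mult; simpl; ring.
    apply (@is_pseries_incr_1 R_AbsRing R_NormedModule _ e (e * (Bf e * Bf (2 * e)))).
    apply (@is_pseries_incr_1 R_AbsRing R_NormedModule _ e (Bf e * Bf (2 * e))).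
    apply is_pseries_mult.
    + apply Bf_pseries; lra.
    + apply gam_pseries; lra.
    + apply (radius_lt _ 1). apply beta_radius. lra.
    + apply (radius_lt _ (1/2)). apply gam_radius. lra.
Qed.

Lemma pp_l2 : is_principal_part (fun e => phi_l2 e 1) (principal_sum 2 (fun k => match k with 0%nat => 0 | _ => 1/2 end)).
Proof.
  exists 2%nat, (fun k => match k with 0%nat => 0 | _ => 1/2 end), c3, (1/4). split. lra. split. reflexivity.
  intros e He. rewrite phi_l2_val by lra. rewrite Rpower_1_l, Rmult_1_l.
  replace (Ival e * Ival (2 * e) - principal_sum 2 (fun k => match k with 0%nat => 0 | _ => 1/2 end) e)
    with (2 * Bf (2*e) + 1/2 * Bf e + 2 * (e * (e * (Bf e * Bf (2*e))))).
  - apply c3_pseries. lra.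
  - unfold Ival, principal_sum; simpl. field. lra.
Qed.

Lemma Rop_l2 e : 0 < e -> Rop phi_l2 e = 1 / (2 * e^2).
Proof. intros He. rewrite (Rop_val _ _ pp_l2 e He). unfold principal_sum; simpl. field. lra. Qed.


Lemma lim_plus (f g : R -> R) a b : filterlim f (at_right 0) (locally a) -> filterlim g (at_right 0) (locally b) ->
  filterlim (fun x => f x + g x) (at_right 0) (locally (a + b)).
Proof.
  intros Hf Hg. apply (filterlim_comp_2 f g Rplus Hf Hg).
  apply (@filterlim_plus R_AbsRing R_NormedModule a b).
Qed.

Lemma lim_mult (f g : R -> R) a b : filterlim f (at_right 0) (locally a) -> filterlim g (at_right 0) (locally b) ->
  filterlim (fun x => f x * g x) (at_right 0) (locally (a * b)).
Proof.
  intros Hf Hg. apply (filterlim_comp_2 f g Rmult Hf Hg).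
  apply (@filterlim_mult R_AbsRing a b).
Qed.

Lemma lim_const (a : R) : filterlim (fun _ => a) (at_right 0) (locally a).
Proof. apply filterlim_const. Qed.

Lemma lim_id : filterlim (fun x => x) (at_right 0) (locally 0).
Proof. apply (filterlim_filter_le_1 _ (filter_le_within _)). apply filterlim_id. Qed.

Lemma at_right_small d : 0 < d -> (at_right 0) (fun e => 0 < e < d).
Proof.
  intros Hd. exists (mkposreal d Hd). intros y Hy Hy0. split; auto.
  unfold ball in Hy; simpl in Hy; unfold AbsRing_ball, abs, minus, plus, opp in Hy; simpl in Hy.
  apply Rabs_lt_between in Hy. lra.
Qed.

Lemma PS_cont : filterlim (PSeries beta) (locally 0) (locally (PI^2/6)).
Proof.
  rewrite <- beta0, <- PSeries_0. apply continuity_pt_filterlim, PSeries_continuity.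
  apply (radius_lt _ 1). apply beta_radius. lra.
Qed.

Lemma lim_B1 : filterlim Bf (at_right 0) (locally (PI^2/6)).
Proof.
  apply (filterlim_ext_loc (PSeries beta)).
  - apply (filter_imp (fun e => 0 < e < 1)). 2: apply at_right_small; lra.
    intros e He. apply is_pseries_unique, Bf_pseries. lra.
  - apply (filterlim_filter_le_1 _ (filter_le_within _)). apply PS_cont.
Qed.

Lemma lim_B2 : filterlim (fun e => Bf (2 * e)) (at_right 0) (locally (PI^2/6)).
Proof.
  apply (filterlim_ext_loc (fun e => PSeries beta (2 * e))).
  - apply (filter_imp (fun e => 0 < e < 1/2)). 2: apply at_right_small; lra.
    intros e He. apply is_pseries_unique, Bf_pseries. lra.
  - apply (filterlim_comp _ _ _ (fun e => 2 * e) (PSeries beta) (at_right 0) (locally 0)).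
    + replace 0 with (2 * 0) at 2 by ring. apply lim_mult. apply lim_const. apply lim_id.
    + apply PS_cont.
Qed.

Lemma lim_q c : 0 < c -> filterlim (fun e => (Rpower c (-e) - 1) / e) (at_right 0) (locally (- ln c)).
Proof.
  intros Hc.
  assert (Hd : derivable_pt_lim (fun h => Rpower c (-h)) 0 (- ln c)).
  { apply is_derive_Reals. unfold Rpower.
    auto_derive. auto. rewrite Ropp_0, Rmult_0_l, exp_0. ring. }
  apply (proj2 (filterlim_locally _ _)). intros eps.
  destruct (Hd eps (cond_pos eps)) as [delta Hdel].
  exists delta. intros y Hy Hy0.
  unfold ball in Hy; simpl in Hy; unfold AbsRing_ball, abs, minus, plus, opp in Hy; simpl in Hy.
  rewrite Ropp_0, Rplus_0_r in Hy.
  specialize (Hdel y ltac:(lra) Hy).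
  unfold ball; simpl; unfold AbsRing_ball, abs, minus, plus, opp; simpl.
  rewrite Rplus_0_l, Ropp_0 in Hdel. unfold Rpower at 2 in Hdel. rewrite Rmult_0_l, exp_0 in Hdel.
  exact Hdel.
Qed.


Lemma lim_minus (f g : R -> R) a b : filterlim f (at_right 0) (locally a) -> filterlim g (at_right 0) (locally b) ->
  filterlim (fun x => f x - g x) (at_right 0) (locally (a - b)).
Proof.
  intros Hf Hg. unfold Rminus. apply lim_plus. exact Hf.
  replace (- b) with (-1 * b) by ring.
  apply (filterlim_ext (fun x => -1 * g x)). intros; ring.
  apply lim_mult. apply lim_const. exact Hg.
Qed.

Theorem mainTheorem6 (c : R) (hc : 0 < c) :
  filterlim
    (fun e => phi_l2 e c - Rop phi_l2 e - Rop phi_dot e * phi_dot e c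
              + Rop (fun e' c' => Rop phi_dot e' * phi_dot e' c') e)
    (at_right 0)
    (locally ((ln c) ^ 2 / 2 + PI ^ 2 / 4)).
Proof.
  assert (Q := lim_q c hc).
  assert (UL := lim_plus _ _ _ _ (lim_const 1) (lim_mult _ _ _ _ lim_id Q)).
  assert (KL := lim_plus _ _ _ _ (lim_plus _ _ _ _ (lim_mult _ _ _ _ (lim_const 2) lim_B2)
                                         (lim_mult _ _ _ _ (lim_const (/2)) lim_B1))
                 (lim_mult _ _ _ _ (lim_const 2) (lim_mult _ _ _ _ (lim_mult _ _ _ _ lim_id lim_id)
                                                  (lim_mult _ _ _ _ lim_B1 lim_B2)))).
  assert (L := lim_minus _ _ _ _ (lim_plus _ _ _ _ (lim_mult _ _ _ _ (lim_mult _ _ _ _ Q Q) (lim_const (/2)))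
                                   (lim_mult _ _ _ _ (lim_mult _ _ _ _ UL UL) KL))
                 (lim_mult _ _ _ _ UL lim_B1)).
  match type of L with filterlim _ _ (locally ?V) =>
    assert (EV : V = (ln c) ^ 2 / 2 + PI ^ 2 / 4) by (field) end.
  rewrite EV in L. clear EV.
  eapply filterlim_ext_loc. 2: exact L.
  apply (filter_imp (fun e => 0 < e < 1/4)). 2: apply at_right_small; lra.
  intros e He. cbv beta.
  rewrite phi_l2_val by lra. rewrite Rop_l2 by lra. rewrite Rop_dot by lra.
  rewrite phi_dot_val by lra. rewrite Rop_dd by lra.
  replace (- (2 * e)) with (-e + -e) by ring. rewrite Rpower_plus.
  set (u := Rpower c (-e)). unfold Ival. field. lra.
Qed.
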